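(* Consider the model described in the context and suppose the Lipschitz assumption holds. Let $z_1(x)=\mathbb P(x_1=x)$, $x\in\mathcal X$. For $t\in\mathbb N_T$ let $\psi_t(z)\in\mathcal G$ be any minimizer of the right-hand side of $\hat V_t(z)=\min_{\gamma\in\mathcal G}\big(\hat c_t(z,\gamma)+\hat V_{t+1}(\hat f_t(z,\gamma))\big)$, and define the deterministic sequence $z_{t+1}=\hat f_t(z_t,\psi_t(z_t))$. Define the fully decentralized strategy $\mathbf g=\{g_t\}_{t=1}^T$ in which every agent $i$ uses $u^i_t=g_t(x^i_t)$ with $$g_t(x):=\psi_t(z_t)(x),\qquad x\in\mathcal X,\ t\in\mathbb N_T.$$ Then $|J(\mathbf g)-J^\ast|\le \epsilon(n)$ for some $\epsilon(n)\in\mathcal O(1/\sqrt n)$.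
   Context: Fix $n\in\mathbb N$ agents, a horizon $T\in\mathbb N$, and finite sets $\mathcal X$ (states), $\mathcal U$ (actions), $\mathcal W$ (noises); $\mathbb N_k=\{1,\dots,k\}$. Let $\mathcal I(\mathcal X)=[0,1]^{\mathcal X}$, $\Delta(\mathcal X)$ the set of probability vectors on $\mathcal X$, and $\mathcal M_n=\{m\in\Delta(\mathcal X): m(x)\in\{0,\tfrac1n,\dots,1\}\ \forall x\}$. Agent $i\in\mathbb N_n$ has state $x^i_t\in\mathcal X$ and action $u^i_t\in\mathcal U$ at time $t\in\mathbb N_T$; the mean-field is $m_t(x)=\frac1n\sum_{i=1}^n\mathbb 1(x^i_t=x)$. Dynamics: $x^i_{t+1}=f_t(x^i_t,u^i_t,w^i_t,m_t)$ with $f_t:\mathcal X\times\mathcal U\times\mathcal W\times\mathcal I(\mathcal X)\to\mathcal X$. The initial states $x^1_1,\dots,x^n_1$ are i.i.d. with law $\mathbb P(x_1=\cdot)$; for each $t$, $w^1_t,\dots,w^n_t$ are i.i.d. with common law $\mathbb P(w_t=\cdot)$; initial states and all noises are mutually independent. Transition probabilities: $\mathbb P(y\mid x,u,z)=\sum_{w\in\mathcal W}\mathbb 1(f_t(x,u,w,z)=y)\,\mathbb P(w_t=w)$ for $z\in\mathcal I(\mathcal X)$. Costs $\ell_t:\mathcal X\times\mathcal U\times\mathcal I(\mathcal X)\to\mathbb R_{\ge0}$. Lipschitz assumption: there are constants $K^1_t,K^2_t>0$ with $|\mathbb P(y|x,u,z_1)-\mathbb P(y|x,u,z_2)|\le K^1_t\|z_1-z_2\|_\infty$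 and $|\ell_t(x,u,z_1)-\ell_t(x,u,z_2)|\le K^2_t\|z_1-z_2\|_\infty$ for all $x,y\in\mathcal X,u\in\mathcal U,z_1,z_2\in\mathcal I(\mathcal X)$. For a strategy, its cost is $J=\mathbb E\big[\sum_{t=1}^T\frac1n\sum_{i=1}^n\ell_t(x^i_t,u^i_t,m_t)\big]$. $J^\ast$ is the optimal cost over mean-field sharing strategies, i.e. strategies of the form $u^i_t=g_t(x^i_t,m_t)$ with $g_t:\mathcal X\times\mathcal M_n\to\mathcal U$ common to all agents. $\mathcal G$ is the finite set of all maps $\gamma:\mathcal X\to\mathcal U$. For $z\in\mathcal I(\mathcal X)$, $\gamma\in\mathcal G$: $\hat f_t(z,\gamma)(y)=\sum_{x}z(x)\mathbb P(y|x,\gamma(x),z)$ and $\hat c_t(z,\gamma)=\sum_x z(x)\ell_t(x,\gamma(x),z)$. The functions $\hat V_t:\Delta(\mathcal X)\to\mathbb R$ are defined by $\hat V_{T+1}\equiv0$ and $\hat V_t(z)=\min_{\gamma\in\mathcal G}\big(\hat c_t(z,\gamma)+\hat V_{t+1}(\hat f_t(z,\gamma))\big)$ for $t=T,\dots,1$. All model data ($T,\mathcal X,\mathcal U,\mathcal W,f_t,\ell_t$, the laws of initial states and noises) do not depend on $n$; $\mathcal O(1/\sqrt n)$ denotes a quantity bounded by $C/\sqrt n$ with $C$ independent of $n$. *)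

(* Defs.v *)
From HB Require Import structures.
From mathcomp Require Import all_boot all_order all_algebra.
From mathcomp Require Import boolp classical_sets reals.
Set Implicit Arguments. Unset Strict Implicit. Unset Printing Implicit Defensive.
Import Order.TTheory GRing.Theory Num.Theory.
Local Open Scope ring_scope.
Local Open Scope classical_set_scope.

Section MFModel.
Variables (R : realType) (X U W : finType) (T : nat).

(* Time is 0-indexed: paper time t in 1..T corresponds to t-1 in 0..T-1. *)
Variable f : nat -> X -> U -> W -> (X -> R) -> X.
Variable l : nat -> X -> U -> (X -> R) -> R.
Variable p0 : X -> R.
Variable pw : nat -> W -> R.

Definition inI (z : X -> R) : Prop := forall x, 0 <= z x <= 1.
Definition inDelta (z : X -> R) : Prop :=
  (forall x, 0 <= z x) /\ \sum_x z x = 1.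
Definition isProb (A : finType) (p : A -> R) : Prop :=
  (forall a, 0 <= p a) /\ \sum_a p a = 1.

Definition supnorm (z : X -> R) : R := \big[Num.max/0]_x `|z x|.

Definition Ptr (t : nat) (y x : X) (u : U) (z : X -> R) : R :=
  \sum_w (f t x u w z == y)%:R * pw t w.

Definition lipschitz_assumption : Prop :=
  forall t, (t < T)%N ->
    exists K1 K2 : R, 0 < K1 /\ 0 < K2 /\
    forall (x y : X) (u : U) (z1 z2 : X -> R), inI z1 -> inI z2 ->
      `|Ptr t y x u z1 - Ptr t y x u z2| <= K1 * supnorm (fun x' => z1 x' - z2 x') /\
      `|l t x u z1 - l t x u z2| <= K2 * supnorm (fun x' => z1 x' - z2 x').

Definition mfield (n : nat) (s : {ffun 'I_n -> X}) : X -> R :=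
  fun x => (#|[set i | s i == x]|)%:R / n%:R.

(* a mean-field sharing strategy: u^i_t = pol t x^i_t m_t (common to all agents) *)
Definition mfs_strategy := nat -> X -> (X -> R) -> U.

(* one step of the joint dynamics under noise sample w (steps t >= T are inert) *)
Definition step (n : nat) (pol : mfs_strategy)
    (w : {ffun 'I_T -> {ffun 'I_n -> W}}) (t : nat) (s : {ffun 'I_n -> X})
    : {ffun 'I_n -> X} :=
  match insub t with
  | Some o => [ffun i => f t (s i) (pol t (s i) (mfield s)) (w o i) (mfield s)]
  | None => s
  end.

Fixpoint traj (n : nat) (pol : mfs_strategy) (s0 : {ffun 'I_n -> X})
    (w : {ffun 'I_T -> {ffun 'I_n -> W}}) (t : nat) : {ffun 'I_n -> X} :=
  match t with
  | 0 => s0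
  | t'.+1 => step pol w t' (traj pol s0 w t')
  end.

Definition outcome_prob (n : nat) (s0 : {ffun 'I_n -> X})
    (w : {ffun 'I_T -> {ffun 'I_n -> W}}) : R :=
  (\prod_i p0 (s0 i)) * \prod_(t < T) \prod_i pw t (w t i).

Definition realized_cost (n : nat) (pol : mfs_strategy) (s0 : {ffun 'I_n -> X})
    (w : {ffun 'I_T -> {ffun 'I_n -> W}}) : R :=
  \sum_(t < T)
    let s := traj pol s0 w t in
    n%:R^-1 * \sum_(i < n) l t (s i) (pol t (s i) (mfield s)) (mfield s).

Definition Jcost (n : nat) (pol : mfs_strategy) : R :=
  \sum_(s0 : {ffun 'I_n -> X}) \sum_(w : {ffun 'I_T -> {ffun 'I_n -> W}})
     outcome_prob s0 w * realized_cost pol s0 w.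

Definition Jstar (n : nat) : R := inf (range (Jcost n)).

Definition fhat (t : nat) (z : X -> R) (g : {ffun X -> U}) : X -> R :=
  fun y => \sum_x z x * Ptr t y x (g x) z.
Definition chat (t : nat) (z : X -> R) (g : {ffun X -> U}) : R :=
  \sum_x z x * l t x (g x) z.

(* Vaux k t z : value with k steps remaining starting at time t *)
Fixpoint Vaux (k t : nat) (z : X -> R) : R :=
  match k with
  | 0 => 0
  | k'.+1 => inf [set chat t z g + Vaux k' t.+1 (fhat t z g) | g in [set: {ffun X -> U}]]
  end.
(* hat V_t (with hat V_T = 0 in 0-indexed time, i.e. hat V_{T+1} = 0 in paper) *)
Definition Vhat (t : nat) (z : X -> R) : R := Vaux (T - t) t z.

Definition Qhat (t : nat) (z : X -> R) (g : {ffun X -> U}) : R :=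
  chat t z g + Vhat t.+1 (fhat t z g).

Fixpoint zseq (psi : nat -> (X -> R) -> {ffun X -> U}) (t : nat) : X -> R :=
  match t with
  | 0 => p0
  | t'.+1 => fhat t' (zseq psi t') (psi t' (zseq psi t'))
  end.

(* the fully decentralized strategy g_t(x) = psi_t(z_t)(x), viewed as a
   (mean-field-ignoring) mean-field sharing strategy *)
Definition decentralized (psi : nat -> (X -> R) -> {ffun X -> U}) : mfs_strategy :=
  fun t x _ => psi t (zseq psi t) x.

End MFModel.

(* Main.v *)
Require Import Defs.
From HB Require Import structures.
From mathcomp Require Import all_boot all_order all_algebra.
From mathcomp Require Import boolp classical_sets reals.
From mathcomp Require Import ring lra.
Import Order.TTheory GRing.Theory Num.Theory.
Local Open Scope ring_scope.

Module Aux.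
Set Implicit Arguments. Unset Strict Implicit. Unset Printing Implicit Defensive.
Section Gen.
Variable R : realType.

Definition upd (J A : finType) (w : {ffun J -> A}) (j0 : J) (a : A) : {ffun J -> A} :=
  [ffun j => if j == j0 then a else w j].

Lemma prod_upd (J A : finType) (q : J -> A -> R) (w : {ffun J -> A}) j0 a :
  \prod_j q j (upd w j0 a j) = q j0 a * \prod_(j | j != j0) q j (w j).
Proof.
rewrite (bigD1 j0) //= ffunE eqxx; congr (_ * _).
by apply: eq_bigr => j /negbTE hj; rewrite ffunE hj.
Qed.

Lemma resample (J A : finType) (q : J -> A -> R) (j0 : J) (F : {ffun J -> A} -> R) :
  \sum_a q j0 a = 1 ->
  \sum_(w : {ffun J -> A}) (\prod_j q j (w j)) * F w =
  \sum_(w : {ffun J -> A}) (\prod_j q j (w j)) * \sum_a q j0 a * F (upd w j0 a).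
Proof.
move=> hq.
have -> : \sum_(w : {ffun J -> A}) (\prod_j q j (w j)) * F w =
   \sum_(w : {ffun J -> A}) \sum_a (\prod_j q j (w j)) * F w * q j0 a.
  by apply: eq_bigr => w _; rewrite -big_distrr /= hq mulr1.
have -> : \sum_(w : {ffun J -> A}) (\prod_j q j (w j)) * \sum_a q j0 a * F (upd w j0 a) =
   \sum_(w : {ffun J -> A}) \sum_a (\prod_j q j (w j)) * (q j0 a * F (upd w j0 a)).
  by apply: eq_bigr => w _; rewrite big_distrr.
rewrite !pair_bigA /=.
pose h (p : {ffun J -> A} * A) := (upd p.1 j0 p.2, p.1 j0).
have hK : involutive h.
  case=> w a; rewrite /h /=; congr (_, _); last by rewrite ffunE eqxx.
  by apply/ffunP => j; rewrite !ffunE; case: eqP => // ->.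
rewrite [RHS](reindex_inj (inv_inj hK)) /=.
apply: eq_bigr => -[w a] _ /=.
have -> : upd (upd w j0 a) j0 (w j0) = w.
  by apply/ffunP => j; rewrite !ffunE; case: eqP => // ->.
rewrite prod_upd (bigD1 j0) //=.
ring.
Qed.
Lemma prodE (I A : finType) (q : I -> A -> R) (phi : I -> A -> R) :
  \sum_(a : {ffun I -> A}) (\prod_i q i (a i)) * \prod_i phi i (a i) =
  \prod_i \sum_b q i b * phi i b.
Proof.
rewrite bigA_distr_bigA /=; apply: eq_bigr => a _; by rewrite big_split.
Qed.

Lemma prod_sum1 (I A : finType) (q : I -> A -> R) :
  (forall i, \sum_b q i b = 1) ->
  \sum_(a : {ffun I -> A}) \prod_i q i (a i) = 1.
Proof.
move=> hq; rewrite -bigA_distr_bigA /=; exact: big1.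
Qed.

Lemma prod_ge0 (I A : finType) (q : I -> A -> R) (a : {ffun I -> A}) :
  (forall i b, 0 <= q i b) -> 0 <= \prod_i q i (a i).
Proof. move=> hq; apply: prodr_ge0 => i _; exact: hq. Qed.

Lemma sq_expect (A : finType) (p : A -> R) (Y : A -> R) :
  (forall a, 0 <= p a) -> \sum_a p a = 1 ->
  \sum_a p a * `|Y a| <= Num.sqrt (\sum_a p a * Y a ^+ 2).
Proof.
move=> hp h1.
set c := \sum_a p a * `|Y a|.
have c0 : 0 <= c by apply: sumr_ge0 => a _; apply: mulr_ge0.
have H0 : 0 <= \sum_a p a * (`|Y a| - c) ^+ 2.
  by apply: sumr_ge0 => a _; apply: mulr_ge0 => //; apply: sqr_ge0.
have E : \sum_a p a * (`|Y a| - c) ^+ 2 =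
   \sum_a p a * Y a ^+ 2 - (2 * c) * c + c ^+ 2 * \sum_a p a.
  transitivity (\sum_a (p a * Y a ^+ 2 - (2 * c) * (p a * `|Y a|) + c ^+ 2 * p a)).
    by apply: eq_bigr => a _; rewrite -[Y a ^+ 2](real_normK (num_real (Y a))); ring.
  by rewrite big_split sumrB /= -!mulr_sumr.
rewrite h1 mulr1 in E.
have : c ^+ 2 <= \sum_a p a * Y a ^+ 2 by lra.
rewrite -(ler_sqrt (R:=R)); last by apply: sumr_ge0 => a _; apply: mulr_ge0 => //; apply: sqr_ge0.
by rewrite sqrtr_sqr ger0_norm.
Qed.


Lemma var_bound n (A : finType) (q : 'I_n -> A -> R) (D : 'I_n -> A -> R) :
  (forall i b, 0 <= q i b) -> (forall i, \sum_b q i b = 1) ->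
  (forall i, \sum_b q i b * D i b = 0) -> (forall i b, `|D i b| <= 1) ->
  \sum_(a : {ffun 'I_n -> A}) (\prod_i q i (a i)) * (\sum_i D i (a i)) ^+ 2 <= n%:R.
Proof.
move=> hq0 hq1 hD0 hD1.
have E : forall a : {ffun 'I_n -> A},
    (\sum_i D i (a i)) ^+ 2 = \sum_i \sum_j D i (a i) * D j (a j).
  by move=> a; rewrite expr2 big_distrl /=; apply: eq_bigr => i _; rewrite big_distrr.
under eq_bigr => a _ do rewrite E mulr_sumr.
rewrite exchange_big /=.
have -> : n%:R = \sum_(i < n) (1 : R) by rewrite sumr_const card_ord.
apply: ler_sum => i _.
under eq_bigr => a _ do rewrite mulr_sumr.
rewrite exchange_big /= (bigD1 i) //=.
rewrite [X in _ + X]big1 ?addr0.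
- apply: (@le_trans _ _ (\sum_(a : {ffun 'I_n -> A}) \prod_k q k (a k))).
    apply: ler_sum => a _; rewrite -[X in _ <= X]mulr1.
    apply: ler_wpM2l; first exact: prod_ge0.
    by move: (hD1 i (a i)); rewrite ler_norml => /andP[h1 h2]; nra.
  by rewrite prod_sum1.
move=> j hji.
pose phi k b := if k == i then D i b else if k == j then D j b else 1.
transitivity (\sum_(a : {ffun 'I_n -> A}) (\prod_k q k (a k)) * \prod_k phi k (a k)).
  apply: eq_bigr => a _; congr (_ * _).
  rewrite (bigD1 i) //= /phi eqxx (bigD1 j) /=; last exact: hji.
  rewrite (negbTE hji) eqxx big1 ?mulr1 // => k /andP[/negbTE -> /negbTE ->] //.
rewrite prodE (bigD1 i) //=.
have -> : \sum_b q i b * phi i b = 0.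
  transitivity (\sum_b q i b * D i b); last exact: hD0 i.
  by apply: eq_bigr => b _; rewrite /phi eqxx.
by rewrite mul0r.
Qed.

Lemma conc_mf (X : finType) n (A : finType) (q : 'I_n -> A -> R) (h : 'I_n -> A -> X) :
  (0 < n)%N -> (forall i b, 0 <= q i b) -> (forall i, \sum_b q i b = 1) ->
  \sum_(a : {ffun 'I_n -> A}) (\prod_i q i (a i)) *
    \sum_y `| n%:R^-1 * \sum_i (h i (a i) == y)%:R
             - n%:R^-1 * \sum_i \sum_b q i b * (h i b == y)%:R |
  <= #|X|%:R / Num.sqrt n%:R.
Proof.
move=> n0 hq0 hq1.
under eq_bigr => a _ do rewrite mulr_sumr.
rewrite exchange_big /=.
have -> : (#|X|%:R / Num.sqrt n%:R : R) = \sum_(y : X) (Num.sqrt n%:R)^-1.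
  by rewrite sumr_const -[RHS]mulr_natl.
apply: ler_sum => y _.
pose D (i : 'I_n) b := (h i b == y)%:R - \sum_b' q i b' * (h i b' == y)%:R : R.
have nR : 0 < n%:R :> R by rewrite ltr0n.
have eq1 : forall a : {ffun 'I_n -> A},
  `| n%:R^-1 * \sum_i (h i (a i) == y)%:R
             - n%:R^-1 * \sum_i \sum_b q i b * (h i b == y)%:R |
   = n%:R^-1 * `| \sum_i D i (a i) |.
  move=> a; rewrite -mulrBr normrM ger0_norm ?invr_ge0 ?ler0n //.
  by rewrite /D sumrB.
under eq_bigr => a _ do rewrite eq1 mulrCA.
rewrite -mulr_sumr.
have hs := sq_expect (p := fun a : {ffun 'I_n -> A} => \prod_i q i (a i))
   (fun a => \sum_i D i (a i)) (fun a => prod_ge0 a hq0) (prod_sum1 hq1).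
have hv : \sum_(a : {ffun 'I_n -> A}) (\prod_i q i (a i)) * (\sum_i D i (a i)) ^+ 2 <= n%:R.
  apply: var_bound => //.
  - move=> i; rewrite /D.
    under eq_bigr => b _ do rewrite mulrBr.
    by rewrite sumrB -big_distrl /= hq1 mul1r subrr.
  - move=> i b; rewrite /D.
    have e0 : 0 <= \sum_b' q i b' * (h i b' == y)%:R.
      by apply: sumr_ge0 => b' _; apply: mulr_ge0.
    have e1 : \sum_b' q i b' * (h i b' == y)%:R <= 1.
      rewrite -[X in _ <= X](hq1 i); apply: ler_sum => b' _.
      by rewrite -[X in _ <= X]mulr1; apply: ler_wpM2l => //; case: (_ == _).
    rewrite ler_norml; case: (_ == _) => /=; apply/andP; split; lra.
have hsq : Num.sqrt (\sum_(a : {ffun 'I_n -> A}) (\prod_i q i (a i)) * (\sum_i D i (a i)) ^+ 2)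
    <= Num.sqrt n%:R by rewrite ler_sqrt // ler0n.
set s := Num.sqrt n%:R in hsq *.
have s0 : 0 < s by rewrite sqrtr_gt0.
have s2 : s ^+ 2 = n%:R by rewrite sqr_sqrtr // ler0n.
have -> : s^-1 = n%:R^-1 * s.
  by rewrite -s2; field; rewrite gt_eqF.
apply: ler_wpM2l; first by rewrite invr_ge0 ler0n.
exact: (le_trans hs hsq).
Qed.

End Gen.

Section Model.
Local Open Scope classical_set_scope.
Variables (R : realType) (X U W : finType) (T : nat).
Variable f : nat -> X -> U -> W -> (X -> R) -> X.
Variable l : nat -> X -> U -> (X -> R) -> R.
Variable p0 : X -> R.
Variable pw : nat -> W -> R.
Hypothesis Hp0 : isProb p0.
Hypothesis Hpw : forall t, isProb (pw t).
Hypothesis Hl : forall t x u z, 0 <= l t x u z.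

Lemma eqler (a b : R) : a = b -> a <= b.
Proof. by move->. Qed.

Definition n1 (z : X -> R) : R := \sum_x `|z x|.

Lemma n1_ge0 z : 0 <= n1 z.
Proof. by apply: sumr_ge0 => x _. Qed.

Lemma le_sum1 (I : finType) (F : I -> R) i : (forall j, 0 <= F j) -> F i <= \sum_j F j.
Proof. by move=> h; rewrite (bigD1 i) //= lerDl; apply: sumr_ge0. Qed.

Lemma supnorm_le z : supnorm z <= n1 z.
Proof.
rewrite /supnorm; apply: bigmax_le => [|x _]; first exact: n1_ge0.
exact: (@le_sum1 X (fun x => `|z x|) x (fun j => normr_ge0 _)).
Qed.

Lemma n1_sym z1 z2 : n1 (fun x => z1 x - z2 x) = n1 (fun x => z2 x - z1 x).
Proof. by apply: eq_bigr => x _; rewrite distrC. Qed.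

Lemma n1_tri z1 z2 z3 :
  n1 (fun x => z1 x - z3 x) <= n1 (fun x => z1 x - z2 x) + n1 (fun x => z2 x - z3 x).
Proof.
rewrite /n1 -big_split /=; apply: ler_sum => x _.
by have := ler_normD (z1 x - z2 x) (z2 x - z3 x); rewrite subrKA.
Qed.

Lemma delta_I (z : X -> R) : inDelta z -> inI z.
Proof.
case=> h0 h1 x; rewrite h0 /= -h1.
exact: (@le_sum1 X z x h0).
Qed.

Lemma n1_delta (z : X -> R) : inDelta z -> n1 z = 1.
Proof. by case=> h0 h1; rewrite -h1; apply: eq_bigr => x _; rewrite ger0_norm. Qed.

Lemma sum_ind (F : X -> R) y : \sum_b F b * (b == y)%:R = F y.
Proof.
rewrite (bigD1 y) //= eqxx mulr1 big1 ?addr0 // => b /negbTE ->.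
by rewrite mulr0.
Qed.

Lemma sum_by_state n (s : {ffun 'I_n -> X}) (G : X -> R) :
  \sum_i G (s i) = \sum_x #|[set i | s i == x]|%:R * G x.
Proof.
rewrite (partition_big s xpredT) //=; apply: eq_bigr => x _.
rewrite (eq_bigr (fun _ => G x)); last by move=> i /eqP ->.
rewrite sumr_const mulr_natl; congr (_ *+ _); apply: eq_card => i.
by rewrite [RHS]inE /= asboolb.
Qed.

Lemma mfield_sum n (s : {ffun 'I_n -> X}) y :
  mfield R s y = n%:R^-1 * \sum_i (s i == y)%:R.
Proof.
rewrite (sum_by_state s (fun x => (x == y)%:R)) sum_ind /mfield.
by rewrite mulrC.
Qed.

Lemma mfield_delta n (s : {ffun 'I_n -> X}) : (0 < n)%N -> inDelta (mfield R s).
Proof.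
move=> n0; split=> [x|].
  by rewrite /mfield divr_ge0 // ler0n.
have := sum_by_state s (fun _ => 1).
rewrite sumr_const card_ord => h.
rewrite /mfield -mulr_suml.
under eq_bigr => x _ do rewrite -[#|_|%:R]mulr1.
by rewrite -h divff // pnatr_eq0 -lt0n.
Qed.

Lemma Ptr_ge0 t y x u z : 0 <= Ptr f pw t y x u z.
Proof.
apply: sumr_ge0 => w _; apply: mulr_ge0; first by rewrite ler0n.
by case: (Hpw t).
Qed.

Lemma Ptr_sum t x u z : \sum_y Ptr f pw t y x u z = 1.
Proof.
rewrite /Ptr exchange_big /=.
rewrite -[RHS](proj2 (Hpw t)); apply: eq_bigr => w _.
rewrite -big_distrl /=.
have -> : \sum_y ((f t x u w z == y)%:R : R) = 1.
  by rewrite -[RHS](sum_ind (fun _ => 1) (f t x u w z)); apply: eq_bigr => y _; rewrite mul1r eq_sym.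
by rewrite mul1r.
Qed.

Lemma fhat_delta t z g : inDelta z -> inDelta (fhat f pw t z g).
Proof.
case=> h0 h1; split=> [y|].
  by apply: sumr_ge0 => x _; apply: mulr_ge0 => //; apply: Ptr_ge0.
rewrite /fhat exchange_big /= -h1; apply: eq_bigr => x _.
by rewrite -mulr_sumr Ptr_sum mulr1.
Qed.


Variables K1 K2 : R.
Hypotheses (hK1 : 0 <= K1) (hK2 : 0 <= K2).
Hypothesis hLip : forall t, (t < T)%N -> forall x y u (z1 z2 : X -> R), inI z1 -> inI z2 ->
  `|Ptr f pw t y x u z1 - Ptr f pw t y x u z2| <= K1 * n1 (fun x' => z1 x' - z2 x') /\
  `|l t x u z1 - l t x u z2| <= K2 * n1 (fun x' => z1 x' - z2 x').

Definition Bl := \sum_(t < T) \sum_x \sum_u l t x u (fun _ => 0) + K2.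
Definition Lc := Bl + K2.
Definition Lf := 1 + #|X|%:R * K1.

Lemma Bl_ge0 : 0 <= Bl.
Proof.
apply: addr_ge0 => //; apply: sumr_ge0 => t _; apply: sumr_ge0 => x _.
by apply: sumr_ge0 => u _.
Qed.

Lemma Lc_ge0 : 0 <= Lc.
Proof. by apply: addr_ge0 => //; apply: Bl_ge0. Qed.

Lemma Lf_ge0 : 0 <= Lf.
Proof. by apply: addr_ge0 => //; apply: mulr_ge0 => //; rewrite ler0n. Qed.

Lemma zero_I : inI (fun _ : X => 0 : R).
Proof. by move=> x; rewrite lexx ler01. Qed.

Lemma l_bound t x u (z : X -> R) : (t < T)%N -> inDelta z -> l t x u z <= Bl.
Proof.
move=> ht hz.
have [_ h] := hLip ht x x u (delta_I hz) zero_I.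
have e : n1 (fun x' => z x' - 0) = 1.
  by rewrite -(n1_delta hz); apply: eq_bigr => x' _; rewrite subr0.
rewrite e mulr1 in h.
have h2 : l t x u z <= l t x u (fun _ => 0) + K2.
  by have := ler_norm (l t x u z - l t x u (fun _ => 0)); lra.
apply: le_trans h2 _; rewrite /Bl lerD2r.
have h3 := @le_sum1 _ (fun t : 'I_T => \sum_x \sum_u l t x u (fun _ => 0)) (Ordinal ht)
   (fun j => sumr_ge0 _ (fun x _ => sumr_ge0 _ (fun u _ => Hl _ _ _ _))).
apply: le_trans _ h3 => /=.
apply: le_trans (@le_sum1 _ (fun x => \sum_u l t x u (fun _ => 0)) x
   (fun j => sumr_ge0 _ (fun u _ => Hl _ _ _ _))).
exact: (@le_sum1 _ (fun u => l t x u (fun _ => 0)) u (fun j => Hl _ _ _ _)).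
Qed.

Lemma chat_lip t g (z1 z2 : X -> R) : (t < T)%N -> inDelta z1 -> inDelta z2 ->
  `|chat l t z1 g - chat l t z2 g| <= Lc * n1 (fun x => z1 x - z2 x).
Proof.
move=> ht h1 h2.
set d := n1 (fun x => z1 x - z2 x).
rewrite /chat -sumrB.
apply: le_trans (ler_norm_sum _ _ _) _.
apply: (@le_trans _ _ (\sum_x (`|z1 x - z2 x| * Bl + z2 x * (K2 * d)))).
  apply: ler_sum => x _.
  have -> : z1 x * l t x (g x) z1 - z2 x * l t x (g x) z2 =
     (z1 x - z2 x) * l t x (g x) z1 + z2 x * (l t x (g x) z1 - l t x (g x) z2) by ring.
  apply: le_trans (ler_normD _ _) _; apply: lerD; rewrite normrM.
    by apply: ler_wpM2l => //; rewrite ger0_norm //; apply: l_bound.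
  rewrite (ger0_norm (proj1 h2 x)); apply: ler_wpM2l; first exact: (proj1 h2 x).
  exact: (proj2 (hLip ht x x (g x) (delta_I h1) (delta_I h2))).
rewrite big_split /= -mulr_suml -mulr_suml (proj2 h2) mul1r /Lc.
by rewrite -/(n1 _) -/d; lra.
Qed.

Lemma fhat_lip t g (z1 z2 : X -> R) : (t < T)%N -> inDelta z1 -> inDelta z2 ->
  n1 (fun y => fhat f pw t z1 g y - fhat f pw t z2 g y) <= Lf * n1 (fun x => z1 x - z2 x).
Proof.
move=> ht h1 h2.
set d := n1 (fun x => z1 x - z2 x).
rewrite {1}/n1 /fhat.
apply: (@le_trans _ _ (\sum_y \sum_x (`|z1 x - z2 x| * Ptr f pw t y x (g x) z1 + z2 x * (K1 * d)))).
  apply: ler_sum => y _; rewrite -sumrB; apply: le_trans (ler_norm_sum _ _ _) _.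
  apply: ler_sum => x _.
  have -> : z1 x * Ptr f pw t y x (g x) z1 - z2 x * Ptr f pw t y x (g x) z2 =
     (z1 x - z2 x) * Ptr f pw t y x (g x) z1 + z2 x * (Ptr f pw t y x (g x) z1 - Ptr f pw t y x (g x) z2) by ring.
  apply: le_trans (ler_normD _ _) _; apply: lerD; rewrite normrM.
    by rewrite (ger0_norm (Ptr_ge0 _ _ _ _ _)).
  rewrite (ger0_norm (proj1 h2 x)); apply: ler_wpM2l; first exact: (proj1 h2 x).
  exact: (proj1 (hLip ht x y (g x) (delta_I h1) (delta_I h2))).
under eq_bigr => y _ do rewrite big_split /=.
rewrite big_split /= exchange_big /=.
under eq_bigr => x _ do rewrite -mulr_sumr Ptr_sum mulr1.
under [X in _ + X <= _]eq_bigr => y _ do rewrite -mulr_suml (proj2 h2) mul1r.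
rewrite sumr_const -/(n1 _) -/d /Lf mulrDl mul1r.
by rewrite -[K1 * d *+ _]mulr_natl mulrA.
Qed.

Lemma inf_fin (G : finType) (g0 : G) (F : G -> R) :
  (forall g, inf [set F g | g in [set: G]] <= F g) /\
  exists gs, inf [set F g | g in [set: G]] = F gs.
Proof.
case: (@arg_minP _ R G g0 xpredT F isT) => gs _ hmin.
have lb : lbound [set F g | g in [set: G]] (F gs) by move=> _ [g _ <-]; apply: hmin.
have hl : has_lbound [set F g | g in [set: G]] by exists (F gs).
have ne : [set F g | g in [set: G]] !=set0 by exists (F gs), gs.
have e : inf [set F g | g in [set: G]] = F gs.
  apply/eqP; rewrite eq_le; apply/andP; split; first by apply: ge_inf => //; exists gs.
  exact: lb_le_inf.
split; last by exists gs.
by move=> g; rewrite e; apply: hmin.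
Qed.

Variable g0 : {ffun X -> U}.

Fixpoint LV k := match k with 0 => 0 | k'.+1 => Lc + LV k' * Lf end.

Lemma LV_ge0 k : 0 <= LV k.
Proof.
elim: k => [|k IH] //=; apply: addr_ge0; first exact: Lc_ge0.
by apply: mulr_ge0 => //; apply: Lf_ge0.
Qed.

Lemma Vaux_le k : forall t, (t + k <= T)%N -> forall z1 z2, inDelta z1 -> inDelta z2 ->
  Vaux f l pw k t z1 <= Vaux f l pw k t z2 + LV k * n1 (fun x => z1 x - z2 x).
Proof.
elim: k => [|k IH] t htk z1 z2 h1 h2; first by rewrite /= mul0r addr0.
have ht : (t < T)%N by move: htk; rewrite addnS => /(leq_trans _); apply; rewrite ltnS leq_addr.
have htk' : (t.+1 + k <= T)%N by rewrite addSn -addnS.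
rewrite /=.
have [lb1 _] := inf_fin g0 (fun g => chat l t z1 g + Vaux f l pw k t.+1 (fhat f pw t z1 g)).
have [_ [g2 e2]] := inf_fin g0 (fun g => chat l t z2 g + Vaux f l pw k t.+1 (fhat f pw t z2 g)).
rewrite e2; apply: le_trans (lb1 g2) _.
have c := chat_lip g2 ht h1 h2.
have c' := ler_norm (chat l t z1 g2 - chat l t z2 g2).
have v := IH t.+1 htk' _ _ (fhat_delta t g2 h1) (fhat_delta t g2 h2).
have fl := fhat_lip g2 ht h1 h2.
have fl' : LV k * n1 (fun y => fhat f pw t z1 g2 y - fhat f pw t z2 g2 y) <=
   LV k * (Lf * n1 (fun x => z1 x - z2 x)) by apply: ler_wpM2l => //; apply: LV_ge0.
rewrite mulrDl -mulrA.
lra.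
Qed.

Definition LVT := \sum_(k < T.+1) LV k.

Lemma Vhat_lip t (z1 z2 : X -> R) : (t <= T)%N -> inDelta z1 -> inDelta z2 ->
  Vhat T f l pw t z1 <= Vhat T f l pw t z2 + LVT * n1 (fun x => z1 x - z2 x).
Proof.
move=> ht h1 h2; rewrite /Vhat.
have := Vaux_le (k := T - t) (t := t) _ h1 h2.
rewrite subnKC // => /(_ (leqnn _)) h.
apply: le_trans h _; rewrite lerD2l; apply: ler_wpM2r; first exact: n1_ge0.
have hk : (T - t < T.+1)%N by rewrite ltnS leq_subr.
exact: (@le_sum1 _ (fun k : 'I_T.+1 => LV k) (Ordinal hk) (fun j => LV_ge0 _)).
Qed.

Lemma Vhat_T z : Vhat T f l pw T z = 0.
Proof. by rewrite /Vhat subnn. Qed.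

Lemma Vhat_step t z : (t < T)%N ->
  Vhat T f l pw t z = inf [set Qhat T f l pw t z g | g in [set: {ffun X -> U}]].
Proof. by move=> ht; rewrite /Vhat /Qhat -(subnSK ht). Qed.

Lemma Vhat_le_Q t z g : (t < T)%N -> Vhat T f l pw t z <= Qhat T f l pw t z g.
Proof. by move=> ht; rewrite Vhat_step //; apply: (proj1 (inf_fin g0 _)). Qed.

Variable psi : nat -> (X -> R) -> {ffun X -> U}.
Hypothesis Hpsi : forall t, (t < T)%N -> forall z, inDelta z ->
     forall g, Qhat T f l pw t z (psi t z) <= Qhat T f l pw t z g.

Lemma Vhat_eq_Q t z : (t < T)%N -> inDelta z ->
  Vhat T f l pw t z = Qhat T f l pw t z (psi t z).
Proof.
move=> ht hz; rewrite Vhat_step //.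
have [lb [gs e]] := inf_fin g0 (fun g => Qhat T f l pw t z g).
apply/eqP; rewrite eq_le lb /= e; exact: Hpsi.
Qed.


Section Traj.
Variable n : nat.
Local Notation SS := {ffun 'I_n -> X}.
Local Notation WW := {ffun 'I_T -> {ffun 'I_n -> W}}.
Implicit Types (pol : nat -> X -> (X -> R) -> U) (w : WW).

Definition mt pol (s0 : SS) w t := mfield R (traj f pol s0 w t).
Definition gam pol (s0 : SS) w t : {ffun X -> U} := [ffun x => pol t x (mt pol s0 w t)].
Definition dev pol (s0 : SS) w t :=
  n1 (fun y => mt pol s0 w t.+1 y - fhat f pw t (mt pol s0 w t) (gam pol s0 w t) y).

Lemma rc_eq pol (s0 : SS) w :
  realized_cost f l pol s0 w = \sum_(t < T) chat l t (mt pol s0 w t) (gam pol s0 w t).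
Proof.
apply: eq_bigr => t _ /=.
set s := traj f pol s0 w t.
rewrite (sum_by_state s (fun x => l t x (pol t x (mfield R s)) (mfield R s))) mulr_sumr.
apply: eq_bigr => x _; rewrite ffunE /mt /mfield -/s.
by rewrite mulrA [_^-1 * _]mulrC.
Qed.

Definition Ex (F : SS -> WW -> R) :=
  \sum_s0 \sum_w outcome_prob p0 pw s0 w * F s0 w.

Definition P0 (s0 : SS) := \prod_i p0 (s0 i).
Definition PW w := \prod_(t < T) \prod_i pw t (w t i).

Lemma P0_ge0 (s0 : SS) : 0 <= P0 s0.
Proof. by apply: prodr_ge0 => i _; case: Hp0. Qed.
Lemma PW_ge0 w : 0 <= PW w.
Proof. by apply: prodr_ge0 => t _; apply: prodr_ge0 => i _; case: (Hpw t). Qed.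
Lemma P0_sum : \sum_s0 P0 s0 = 1.
Proof. by apply: (@prod_sum1 R _ _ (fun _ => p0)) => i; case: Hp0. Qed.
Lemma Q_sum (t : nat) : \sum_(a : {ffun 'I_n -> W}) \prod_i pw t (a i) = 1.
Proof. by apply: (@prod_sum1 R _ _ (fun _ => pw t)) => i; case: (Hpw t). Qed.
Lemma PW_sum : \sum_w PW w = 1.
Proof.
by apply: (@prod_sum1 R _ _ (fun (t : 'I_T) (a : {ffun 'I_n -> W}) => \prod_i pw t (a i))) => t; apply: Q_sum.
Qed.

Lemma Ex_split F : Ex F = \sum_s0 P0 s0 * \sum_w PW w * F s0 w.
Proof.
apply: eq_bigr => s0 _; rewrite mulr_sumr; apply: eq_bigr => w _.
by rewrite /outcome_prob mulrA.
Qed.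

Lemma Ex_le F G : (forall s0 w, F s0 w <= G s0 w) -> Ex F <= Ex G.
Proof.
move=> h; apply: ler_sum => s0 _; apply: ler_sum => w _; apply: ler_wpM2l => //.
by apply: mulr_ge0; [apply: P0_ge0 | apply: PW_ge0].
Qed.

Lemma Ex_const c : Ex (fun _ _ => c) = c.
Proof.
rewrite Ex_split.
under eq_bigr => s0 _ do rewrite -big_distrl /= PW_sum mul1r.
by rewrite -big_distrl /= P0_sum mul1r.
Qed.

Lemma Ex_lin a F G : Ex (fun s w => F s w + a * G s w) = Ex F + a * Ex G.
Proof.
rewrite /Ex mulr_sumr -big_split; apply: eq_bigr => s0 _.
rewrite mulr_sumr -big_split; apply: eq_bigr => w _ /=; ring.
Qed.

Lemma Ex_sum (F : nat -> SS -> WW -> R) :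
  Ex (fun s w => \sum_(t < T) F t s w) = \sum_(t < T) Ex (F t).
Proof.
rewrite /Ex.
under eq_bigr => s0 _ do under eq_bigr => w _ do rewrite mulr_sumr.
under eq_bigr => s0 _ do rewrite exchange_big /=.
by rewrite exchange_big.
Qed.

Lemma Ex_bound F c : (forall s0, \sum_w PW w * F s0 w <= c) -> Ex F <= c.
Proof.
move=> h; rewrite Ex_split.
apply: le_trans (_ : \sum_s0 P0 s0 * c <= c).
  by apply: ler_sum => s0 _; apply: ler_wpM2l => //; apply: P0_ge0.
by rewrite -big_distrl /= P0_sum mul1r.
Qed.

Lemma traj_upd_le pol (s0 : SS) w (j0 : 'I_T) a k : (k <= j0)%N ->
  traj f pol s0 (upd w j0 a) k = traj f pol s0 w k.
Proof.
elim: k => [//|k IH] hk /=.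
rewrite IH ?(ltnW hk) // /step.
case: insubP => [o _ ho|//].
apply/ffunP => i; rewrite !ffunE.
have -> : (o == j0) = false by rewrite -val_eqE /= ho ltn_eqF.
by [].
Qed.

Lemma traj_upd_next pol (s0 : SS) w t (ht : (t < T)%N) a :
  traj f pol s0 (upd w (Ordinal ht) a) t.+1 =
  [ffun i => f t (traj f pol s0 w t i)
      (pol t (traj f pol s0 w t i) (mfield R (traj f pol s0 w t))) (a i)
      (mfield R (traj f pol s0 w t))].
Proof.
rewrite /= traj_upd_le // /step (insubT (fun t => (t < T)%N) ht).
by apply/ffunP => i; rewrite !ffunE eqxx.
Qed.

Hypothesis n0 : (0 < n)%N.

Lemma Ex_m0 pol :
  Ex (fun s0 w => n1 (fun y => mt pol s0 w 0 y - p0 y)) <= #|X|%:R / Num.sqrt n%:R.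
Proof.
rewrite Ex_split /mt /=.
under eq_bigr => s0 _ do rewrite -big_distrl /= PW_sum mul1r.
have := conc_mf (q := fun _ => p0) (fun _ b => b) n0 (fun _ b => proj1 Hp0 b)
   (fun _ => proj2 Hp0).
apply: le_trans; apply: ler_sum => s0 _; apply: ler_wpM2l; first exact: P0_ge0.
apply: eqler; apply: eq_bigr => y _.
rewrite /mt /= mfield_sum; congr (`| _ - _ |).
under eq_bigr => i _ do rewrite sum_ind.
rewrite sumr_const card_ord -[p0 y *+ n]mulr_natl mulrA mulVf ?mul1r //.
by rewrite pnatr_eq0 -lt0n.
Qed.

Lemma Ex_dev pol t : (t < T)%N ->
  Ex (fun s0 w => dev pol s0 w t) <= #|X|%:R / Num.sqrt n%:R.
Proof.
move=> ht; apply: Ex_bound => s0.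
rewrite /PW (resample (q := fun (j : 'I_T) (a : {ffun 'I_n -> W}) => \prod_i pw j (a i))
   (j0 := Ordinal ht) _ (Q_sum _)).
apply: (@le_trans _ _ (\sum_w PW w * (#|X|%:R / Num.sqrt n%:R))); last first.
  by rewrite -big_distrl /= PW_sum mul1r.
apply: ler_sum => w _; apply: ler_wpM2l; first exact: PW_ge0.
set s := traj f pol s0 w t.
have := conc_mf (q := fun _ => pw t)
  (fun i b => f t (s i) (pol t (s i) (mfield R s)) b (mfield R s)) n0
  (fun _ b => proj1 (Hpw t) b) (fun _ => proj2 (Hpw t)).
apply: le_trans; apply: eqler; apply: eq_bigr => a _; congr (_ * _).
rewrite /dev /mt traj_upd_next traj_upd_le // -/s.
apply: eq_bigr => y _; congr (`| _ - _ |).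
  by rewrite mfield_sum; congr (_ * _); apply: eq_bigr => i _; rewrite ffunE.
rewrite /fhat /gam /mt traj_upd_le // -/s.
have E := sum_by_state s (fun x => \sum_b pw t b *
        (f t x (pol t x (mfield R s)) b (mfield R s) == y)%:R).
rewrite /= in E; rewrite E.
rewrite mulr_sumr; apply: eq_bigr => x _; rewrite ffunE {1}/mfield /Ptr.
rewrite mulrA [_^-1 * _]mulrC; congr (_ * _).
by apply: eq_bigr => b _; rewrite mulrC.
Qed.


Local Notation c := (#|X|%:R / Num.sqrt n%:R : R).

Lemma mt_delta pol (s0 : SS) w t : inDelta (mt pol s0 w t).
Proof. exact: mfield_delta. Qed.

Lemma Ex_add F G : Ex (fun s w => F s w + G s w) = Ex F + Ex G.
Proof.
rewrite -[Ex G]mul1r -Ex_lin; apply: eq_bigr => s0 _; apply: eq_bigr => w _.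
by rewrite mul1r.
Qed.

Lemma lower_pw pol (s0 : SS) w :
  Vhat T f l pw 0 p0 <= realized_cost f l pol s0 w +
    LVT * (n1 (fun y => mt pol s0 w 0 y - p0 y) + \sum_(t < T) dev pol s0 w t).
Proof.
have tel : forall k, (k <= T)%N -> Vhat T f l pw 0 (mt pol s0 w 0) <=
   \sum_(t < k) (chat l t (mt pol s0 w t) (gam pol s0 w t) + LVT * dev pol s0 w t)
   + Vhat T f l pw k (mt pol s0 w k).
  elim => [_|k IH hk]; first by rewrite big_ord0 add0r.
  apply: le_trans (IH (ltnW hk)) _; rewrite big_ord_recr /= -addrA lerD2l.
  have q := Vhat_le_Q (mt pol s0 w k) (gam pol s0 w k) hk.
  have v := Vhat_lip hk (fhat_delta k (gam pol s0 w k) (mt_delta pol s0 w k))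
     (mt_delta pol s0 w k.+1).
  rewrite n1_sym -/(dev pol s0 w k) in v.
  rewrite /Qhat in q; lra.
have := tel T (leqnn T); rewrite Vhat_T addr0 => h.
have v0 := Vhat_lip (leq0n T) (Hp0 : inDelta p0) (mt_delta pol s0 w 0).
rewrite n1_sym in v0.
rewrite big_split /= -mulr_sumr -rc_eq in h.
rewrite mulrDr; lra.
Qed.

Lemma rc_ge0 pol (s0 : SS) w : 0 <= realized_cost f l pol s0 w.
Proof.
apply: sumr_ge0 => t _ /=; apply: mulr_ge0; first by rewrite invr_ge0 ler0n.
by apply: sumr_ge0 => i _.
Qed.

Lemma J_ge0 pol : 0 <= Jcost T f l p0 pw n pol.
Proof.
rewrite -[0](Ex_const 0); apply: Ex_le => s0 w; exact: rc_ge0.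
Qed.

Lemma LVT_ge0 : 0 <= LVT.
Proof. by apply: sumr_ge0 => k _; apply: LV_ge0. Qed.

Lemma c_ge0 : 0 <= c.
Proof. by apply: divr_ge0; rewrite ?ler0n ?sqrtr_ge0. Qed.

Lemma lower_J pol :
  Vhat T f l pw 0 p0 - LVT * (T.+1%:R * c) <= Jcost T f l p0 pw n pol.
Proof.
have h := Ex_le (lower_pw pol).
rewrite Ex_const Ex_lin Ex_add (Ex_sum (fun t s w => dev pol s w t)) in h.
have e0 := Ex_m0 pol.
have e1 : \sum_(t < T) Ex (fun s0 w => dev pol s0 w t) <= T%:R * c.
  apply: le_trans (_ : \sum_(t < T) c <= _).
    by apply: ler_sum => t _; apply: Ex_dev.
  by rewrite sumr_const card_ord -[c *+ T]mulr_natl.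
have e2 : LVT * (Ex (fun s0 w => n1 (fun y => mt pol s0 w 0 y - p0 y)) +
     \sum_(t < T) Ex (fun s0 w => dev pol s0 w t)) <= LVT * (T.+1%:R * c).
  apply: ler_wpM2l; first exact: LVT_ge0.
  rewrite -addn1 natrD mulrDl mul1r; lra.
have -> : Jcost T f l p0 pw n pol = Ex (realized_cost f l pol) by [].
lra.
Qed.

Local Notation pold := (decentralized f p0 pw psi).
Local Notation z := (zseq f p0 pw psi).

Lemma zseq_delta t : inDelta (z t).
Proof. elim: t => [|t IH] /=; [exact: Hp0 | exact: fhat_delta]. Qed.

Lemma gam_dec (s0 : SS) w t : gam pold s0 w t = psi t (z t).
Proof. by apply/ffunP => x; rewrite ffunE. Qed.

Lemma V_tel k : (k <= T)%N ->
  Vhat T f l pw 0 p0 = \sum_(t < k) chat l t (z t) (psi t (z t)) + Vhat T f l pw k (z k).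
Proof.
elim: k => [_|k IH hk]; first by rewrite big_ord0 add0r.
rewrite IH ?(ltnW hk) // big_ord_recr /= -addrA; congr (_ + _).
by rewrite Vhat_eq_Q //; apply: zseq_delta.
Qed.

Lemma upper_pw (s0 : SS) w :
  realized_cost f l pold s0 w <=
  Vhat T f l pw 0 p0 + Lc * \sum_(t < T) n1 (fun y => mt pold s0 w t y - z t y).
Proof.
rewrite rc_eq (V_tel (leqnn T)) Vhat_T addr0 mulr_sumr -big_split /=.
apply: ler_sum => t _; rewrite gam_dec.
have := chat_lip (psi t (z t)) (ltn_ord t) (mt_delta pold s0 w t) (zseq_delta t).
have := ler_norm (chat l t (mt pold s0 w t) (psi t (z t)) - chat l t (z t) (psi t (z t))).
lra.
Qed.

Lemma dist_step (s0 : SS) w t : (t < T)%N ->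
  n1 (fun y => mt pold s0 w t.+1 y - z t.+1 y) <=
  dev pold s0 w t + Lf * n1 (fun y => mt pold s0 w t y - z t y).
Proof.
move=> ht.
apply: le_trans (n1_tri _ (fhat f pw t (mt pold s0 w t) (gam pold s0 w t)) _) _.
rewrite -/(dev pold s0 w t) lerD2l gam_dec /=.
exact: fhat_lip (mt_delta pold s0 w t) (zseq_delta t).
Qed.

Fixpoint aa k : R := match k with 0 => 1 | k'.+1 => 1 + Lf * aa k' end.

Lemma Ex_dist t : (t <= T)%N ->
  Ex (fun s0 w => n1 (fun y => mt pold s0 w t y - z t y)) <= aa t * c.
Proof.
elim: t => [_|t IH ht]; first by rewrite mul1r; apply: Ex_m0.
apply: le_trans (Ex_le (fun s0 w => dist_step s0 w ht)) _.
rewrite Ex_lin [X in _ <= X]mulrDl mul1r.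
apply: lerD; first exact: Ex_dev.
rewrite -mulrA; apply: ler_wpM2l; first exact: Lf_ge0.
exact: IH (ltnW ht).
Qed.

Lemma upper_J :
  Jcost T f l p0 pw n pold <= Vhat T f l pw 0 p0 + Lc * \sum_(t < T) aa t * c.
Proof.
have -> : Jcost T f l p0 pw n pold = Ex (realized_cost f l pold) by [].
apply: le_trans (Ex_le upper_pw) _.
rewrite (Ex_lin _ (fun _ _ => Vhat T f l pw 0 p0)) Ex_const (Ex_sum (fun t s w => n1 (fun y => mt pold s w t y - z t y))) lerD2l.
apply: ler_wpM2l; first exact: Lc_ge0.
by apply: ler_sum => t _; apply: Ex_dist; apply: ltnW.
Qed.

End Traj.

Lemma main_bound : exists C : R, forall n : nat, (0 < n)%N ->
    `| Jcost T f l p0 pw n (decentralized f p0 pw psi) - Jstar T f l p0 pw n |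
      <= C / Num.sqrt (n%:R).
Proof.
exists ((Lc * \sum_(t < T) aa t + LVT * T.+1%:R) * #|X|%:R) => n n0.
set c := (#|X|%:R / Num.sqrt n%:R : R).
have hu := upper_J n0.
have hl := fun pol => lower_J n0 pol.
set J := Jcost T f l p0 pw n (decentralized f p0 pw psi) in hu *.
set V0 := Vhat T f l pw 0 p0 in hu hl *.
have hJs : Jstar T f l p0 pw n <= J.
  rewrite /Jstar; apply: ge_inf; last by exists (decentralized f p0 pw psi).
  by exists 0 => _ [pol _ <-]; apply: J_ge0.
have hJl : V0 - LVT * (T.+1%:R * c) <= Jstar T f l p0 pw n.
  rewrite /Jstar; apply: lb_le_inf; first by exists J, (decentralized f p0 pw psi).
  by move=> _ [pol _ <-]; apply: hl.
rewrite ger0_norm ?subr_ge0 //.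
rewrite -mulr_suml in hu.
have -> : (Lc * \sum_(t < T) aa t + LVT * T.+1%:R) * #|X|%:R / Num.sqrt n%:R =
   Lc * ((\sum_(t < T) aa t) * c) + LVT * (T.+1%:R * c).
  by rewrite /c; ring.
rewrite -/c in hu; lra.
Qed.

End Model.



Lemma lip_unif (R : realType) (X U W : finType) (T : nat)
  (f : nat -> X -> U -> W -> (X -> R) -> X)
  (l : nat -> X -> U -> (X -> R) -> R) (pw : nat -> W -> R) :
  lipschitz_assumption T f l pw ->
  exists K1 K2 : R, 0 <= K1 /\ 0 <= K2 /\
  forall t, (t < T)%N -> forall x y u (z1 z2 : X -> R), inI z1 -> inI z2 ->
  `|Ptr f pw t y x u z1 - Ptr f pw t y x u z2| <= K1 * n1 (fun x' => z1 x' - z2 x') /\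
  `|l t x u z1 - l t x u z2| <= K2 * n1 (fun x' => z1 x' - z2 x').
Proof.
move=> H.
suff : forall k, (k <= T)%N -> exists K1 K2 : R, 0 <= K1 /\ 0 <= K2 /\
  forall t, (t < k)%N -> forall x y u (z1 z2 : X -> R), inI z1 -> inI z2 ->
  `|Ptr f pw t y x u z1 - Ptr f pw t y x u z2| <= K1 * n1 (fun x' => z1 x' - z2 x') /\
  `|l t x u z1 - l t x u z2| <= K2 * n1 (fun x' => z1 x' - z2 x').
  by move/(_ T (leqnn T)).
elim=> [_|k IH hk]; first by exists 0, 0; split; [|split] => //.
have [K1 [K2 [h1 [h2 h3]]]] := IH (ltnW hk).
have [a [b [ha [hb hab]]]] := H k hk.
exists (K1 + a), (K2 + b); split; first by rewrite addr_ge0 // ltW.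
split; first by rewrite addr_ge0 // ltW.
move=> t; rewrite ltnS leq_eqVlt => /orP[/eqP ->|ht] x y u z1 z2 hz1 hz2.
  have [e1 e2] := hab x y u z1 z2 hz1 hz2.
  have s := supnorm_le (fun x' => z1 x' - z2 x').
  have n0 := n1_ge0 (fun x' => z1 x' - z2 x').
  split.
    apply: le_trans e1 _; rewrite mulrDl.
    have : a * supnorm (fun x' => z1 x' - z2 x') <= a * n1 (fun x' => z1 x' - z2 x').
      by apply: ler_wpM2l => //; rewrite ltW.
    have : 0 <= K1 * n1 (fun x' => z1 x' - z2 x') by apply: mulr_ge0.
    lra.
  apply: le_trans e2 _; rewrite mulrDl.
  have : b * supnorm (fun x' => z1 x' - z2 x') <= b * n1 (fun x' => z1 x' - z2 x').
    by apply: ler_wpM2l => //; rewrite ltW.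
  have : 0 <= K2 * n1 (fun x' => z1 x' - z2 x') by apply: mulr_ge0.
  lra.
have [e1 e2] := h3 t ht x y u z1 z2 hz1 hz2.
have n0 := n1_ge0 (fun x' => z1 x' - z2 x').
split.
  apply: le_trans e1 _; rewrite mulrDl lerDl; apply: mulr_ge0 => //; exact: ltW.
apply: le_trans e2 _; rewrite mulrDl lerDl; apply: mulr_ge0 => //; exact: ltW.
Qed.

End Aux.
Unset Implicit Arguments.

Theorem theorem1 (R : realType) (X U W : finType) (T : nat)
  (f : nat -> X -> U -> W -> (X -> R) -> X)
  (l : nat -> X -> U -> (X -> R) -> R)
  (p0 : X -> R) (pw : nat -> W -> R)
  (Hp0 : isProb p0)
  (Hpw : forall t, isProb (pw t))
  (Hl : forall t x u z, 0 <= l t x u z)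
  (Hlip : lipschitz_assumption T f l pw)
  (psi : nat -> (X -> R) -> {ffun X -> U})
  (Hpsi : forall t, (t < T)%N -> forall z, inDelta z ->
     forall g, Qhat T f l pw t z (psi t z) <= Qhat T f l pw t z g) :
  exists C : R, forall n : nat, (0 < n)%N ->
    `| Jcost T f l p0 pw n (decentralized f p0 pw psi) - Jstar T f l p0 pw n |
      <= C / Num.sqrt (n%:R).
Proof.
have [K1 [K2 [h1 [h2 h3]]]] := Aux.lip_unif Hlip.
exact: (Aux.main_bound Hp0 Hpw Hl h1 h2 h3 (psi 0 p0) Hpsi).
Qed.
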